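(* Let $d\ge 1$ and let $\mathcal{C}$ be a chordal $d$-uniform clutter on the vertex set $[n]$ with a simplicial order $e_1,\ldots,e_r$, and let $\{N_1,\ldots,N_r\}$ be the simplicial multiset associated with this order. Put $M_i=\sum_{k=1}^r\binom{N_k}{i}$ and let $\Delta=\Delta(\mathcal{C})$ be the clique complex of $\mathcal{C}$. Then \[ \mathbf{f}_\Delta(t)=\sum_{i=0}^{d-1}\binom{n}{i}t^i+t^{d-1}\sum_{i\ge 1}M_i t^i=\sum_{i=0}^{d-1}\binom{n}{i}t^i+t^{d-1}\sum_{i=1}^{r}\big((1+t)^{N_i}-1\big). \] In particular, $\dim\Delta=\max\{N_1,\ldots,N_r\}+(d-2)$.
   Context: A $d$-uniform clutter $\mathcal{C}$ on $[n]$ is a set of $d$-element subsets of $[n]$ (its circuits). A $(d-1)$-subset $e\subset[n]$ is a submaximal circuit of $\mathcal{C}$ if $e\subset F$ for some $F\in\mathcal{C}$. A subset $V\subseteq[n]$ is a clique of $\mathcal{C}$ if every $d$-subset of $V$ belongs to $\mathcal{C}$ (subsets with fewer than $d$ elements are cliques). The clique complex $\Delta(\mathcal{C})$ is the simplicial complex of all cliques. For a $(d-1)$-subset $e$, the open neighborhood is $\mathrm{N}_{\mathcal{C}}(e)=\{c\in[n]: e\cup\{c\}\in\mathcal{C}\}$ and the closed neighborhood is $\mathrm{N}_{\mathcal{C}}[e]=e\cup\mathrm{N}_{\mathcal{C}}(e)$; $e$ is simplicial in $\mathcal{C}$ if $e$ is a submaximal circuit of $\mathcal{C}$ and $\mathrm{N}_{\mathcal{C}}[e]$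 is a clique of $\mathcal{C}$. The deletion is $\mathcal{C}\setminus e=\{F\in\mathcal{C}: e\not\subset F\}$, and $\mathcal{C}_{e_1\cdots e_i}=(\cdots((\mathcal{C}\setminus e_1)\setminus e_2)\cdots)\setminus e_i$. A simplicial order of $\mathcal{C}$ is a sequence $e_1,\ldots,e_r$ of $(d-1)$-subsets such that $e_1$ is simplicial in $\mathcal{C}$, $e_i$ is simplicial in $\mathcal{C}_{e_1\cdots e_{i-1}}$ for $i>1$, and $\mathcal{C}_{e_1\cdots e_r}=\emptyset$; $\mathcal{C}$ is chordal if it admits a simplicial order (the empty clutter is chordal). The simplicial multiset of the order is $\{N_1,\ldots,N_r\}$ with $N_1=|\mathrm{N}_{\mathcal{C}}(e_1)|$ and $N_i=|\mathrm{N}_{\mathcal{C}_{e_1\cdots e_{i-1}}}(e_i)|$ for $i>1$. For a simplicial complex $\Delta$ with $f_{i}$ faces of dimension $i$ (so $f_{i-1}$ faces of cardinality $i$, $f_{-1}=1$), the $\mathbf{f}$-polynomial is $\mathbf{f}_\Delta(t)=\sum_{i\ge0}f_{i-1}t^i$. *)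

(* Defs.v *)
From mathcomp Require Import all_boot all_order all_algebra.
Set Implicit Arguments. Unset Strict Implicit. Unset Printing Implicit Defensive.
Import GRing.Theory.

Section Clutter.
Variable n : nat.
Notation V := 'I_n.

Definition uniform_clutter (d : nat) (C : {set {set V}}) : bool :=
  [forall F in C, #|F| == d].

Definition submaximal (d : nat) (C : {set {set V}}) (e : {set V}) : bool :=
  (#|e| == d.-1) && [exists F in C, e \subset F].

Definition is_clique (d : nat) (C : {set {set V}}) (W : {set V}) : bool :=
  [forall S : {set V}, ((S \subset W) && (#|S| == d)) ==> (S \in C)].

Definition clique_complex (d : nat) (C : {set {set V}}) : {set {set V}} :=
  [set W | is_clique d C W].

Definition open_nbhd (C : {set {set V}}) (e : {set V}) : {set V} :=
  [set c | e :|: [set c] \in C].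
Definition closed_nbhd (C : {set {set V}}) (e : {set V}) : {set V} :=
  e :|: open_nbhd C e.

Definition simplicial (d : nat) (C : {set {set V}}) (e : {set V}) : bool :=
  submaximal d C e && is_clique d C (closed_nbhd C e).

Definition deletion (C : {set {set V}}) (e : {set V}) : {set {set V}} :=
  [set F in C | ~~ (e \subset F)].

Fixpoint simplicial_order (d : nat) (C : {set {set V}}) (es : seq {set V}) : bool :=
  match es with
  | [::] => C == set0
  | e :: es' => simplicial d C e && simplicial_order d (deletion C e) es'
  end.

Fixpoint simplicial_multiset (C : {set {set V}}) (es : seq {set V}) : seq nat :=
  match es with
  | [::] => [::]
  | e :: es' => #|open_nbhd C e| :: simplicial_multiset (deletion C e) es'
  end.

(* f-polynomial: sum over faces of t^(cardinality) = sum_i f_(i-1) t^i *)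
Definition fpoly (D : {set {set V}}) : {poly int} :=
  \sum_(W in D) 'X^#|W|.

Definition cdim (D : {set {set V}}) : int :=
  (\max_(W in D) #|W|)%:Z - 1.

End Clutter.

(* Main.v *)
Require Import Defs.
From mathcomp Require Import all_boot all_order all_algebra.
From mathcomp Require Import zify.
Import GRing.Theory.
Set Implicit Arguments. Unset Strict Implicit.
Local Open Scope ring_scope.
Local Close Scope ring_scope.

Section Comb.
Variables (n d : nat).
Hypothesis d1 : (1 <= d)%N.
Notation V := 'I_n.

Lemma cliqueP (C : {set {set V}}) (W : {set V}) :
  reflect (forall S : {set V}, S \subset W -> #|S| = d -> S \in C) (is_clique d C W).
Proof.
apply: (iffP forallP) => [H S SW Sd | H S]; last first.
  by apply/implyP => /andP[SW /eqP Sd]; apply: H.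
by have := H S; rewrite SW Sd eqxx.
Qed.

Lemma clique_sub (C : {set {set V}}) (W W' : {set V}) : is_clique d C W -> W' \subset W -> is_clique d C W'.
Proof.
move=> /cliqueP H sW; apply/cliqueP => S SW' Sd; apply: H Sd.
exact: subset_trans SW' sW.
Qed.

Lemma exists_dsub (W : {set V}) : (d <= #|W|)%N ->
  exists2 S : {set V}, S \subset W & #|S| = d.
Proof.
move=> dW.
have : (0 < #|[set A : {set V} | A \subset W & #|A| == d]|)%N.
  by rewrite cards_draws bin_gt0.
rewrite card_gt0 => /set0Pn[S]; rewrite inE => /andP[SW /eqP Sd].
by exists S.
Qed.

Lemma clique0 (W : {set V}) : is_clique d set0 W = (#|W| < d)%N.
Proof.
apply/cliqueP/idP => [H | Wd S SW Sd].
  rewrite ltnNge; apply/negP => /exists_dsub[S SW Sd].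
  by have := H S SW Sd; rewrite inE.
by move: (subset_leq_card SW); rewrite Sd leqNgt Wd.
Qed.

Variable C : {set {set V}}.
Hypothesis unifC : uniform_clutter d C.
Variable e : {set V}.
Hypothesis simpl_e : simplicial d C e.

Let C' := deletion C e.
Let N := open_nbhd C e.

Lemma unif_card F : F \in C -> #|F| = d.
Proof. by move=> FC; move/forallP: unifC => /(_ F) /implyP /(_ FC) /eqP. Qed.

Lemma card_e : #|e| = d.-1.
Proof. by case/andP: simpl_e => /andP[/eqP ->]. Qed.

Lemma add_one c : c \notin e -> #|e :|: [set c]| = d.
Proof. by move=> ce; rewrite setUC -/(c |: e) cardsU1 ce card_e add1n prednK. Qed.

Lemma inN c : (c \in N) = (e :|: [set c] \in C).
Proof. by rewrite inE. Qed.

Lemma N_notin c : c \in N -> c \notin e.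
Proof.
rewrite inN => H; apply/negP => ce.
have : e :|: [set c] = e by apply/setP => x; rewrite !inE; case: eqP => [->|]; rewrite ?ce ?orbT ?orbF.
move=> E; move: (unif_card H); rewrite E card_e; lia.
Qed.

Lemma big_step (W : {set V}) : e \subset W -> (d <= #|W|)%N ->
  exists2 c, c \in W & c \notin e.
Proof.
move=> eW dW.
have : e \proper W by rewrite properEcard eW card_e; case: (d) d1 dW.
by case/properP => _ [c cW ce]; exists c.
Qed.

Lemma N_nonempty : N != set0.
Proof.
case/andP: simpl_e => /andP[_ /existsP[F /andP[FC eF]]] _.
have [c cF ce] := big_step eF (eq_leq (esym (unif_card FC))).
apply/set0Pn; exists c; rewrite inN.
have -> : e :|: [set c] = F; last by [].
apply/eqP; rewrite eqEcard add_one // (unif_card FC) leqnn andbT.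
by rewrite subUset eF sub1set cF.
Qed.

Definition Pe (W : {set V}) := (e \subset W) && (d <= #|W|)%N.

Lemma del_sub : C' \subset C.
Proof. by apply/subsetP => F; rewrite inE => /andP[]. Qed.

Lemma clique_del (W : {set V}) :
  (is_clique d C W && ~~ Pe W) = is_clique d C' W.
Proof.
apply/andP/idP => [[/cliqueP H nP] | H].
  apply/cliqueP => S SW Sd; rewrite inE H //; apply/negP => eS.
  move/negP: nP; apply; rewrite /Pe (subset_trans eS SW) /=.
  by rewrite -Sd subset_leq_card.
split.
  apply/cliqueP => S SW Sd; move/cliqueP: H => /(_ S SW Sd); apply: (subsetP del_sub).
apply/negP => /andP[eW dW].
have [c cW ce] := big_step eW dW.
move/cliqueP: H => /(_ (e :|: [set c])).
rewrite subUset eW sub1set cW add_one // inE => /(_ erefl erefl).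
by rewrite subsetUl andbF.
Qed.

Lemma clique_add (A : {set V}) :
  ((is_clique d C (e :|: A) && Pe (e :|: A)) && ((e :|: A) :\: e == A)) =
  (A \subset N) && (A != set0).
Proof.
apply/idP/idP.
  case/andP => /andP[/cliqueP H /andP[_ dA]] /eqP DA.
  have Ae : forall c, c \in A -> c \notin e.
    by move=> c; rewrite -DA inE => /andP[].
  apply/andP; split.
    apply/subsetP => c cA; rewrite inN; apply: H; last exact: add_one (Ae c cA).
    by rewrite setUS // sub1set.
  apply/negP => /eqP A0; move: dA; rewrite A0 setU0 card_e.
  lia.
case/andP => AN A0.
have Ae : forall c, c \in A -> c \notin e.
  by move=> c cA; apply: N_notin; apply: (subsetP AN).
rewrite andbC; apply/andP; split.
  apply/eqP/setP => x; rewrite !inE; case xA: (x \in A); rewrite ?orbT ?orbF ?andbT ?andNb // (Ae x xA) // ?orbT ?orbF ?andbT.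
apply/andP; split.
  apply: (@clique_sub C (closed_nbhd C e)); first by case/andP: simpl_e.
  by rewrite /closed_nbhd setUS.
rewrite /Pe subsetUl /=.
rewrite cardsU card_e.
have -> : e :&: A = set0.
  apply/setP => x; rewrite !inE; case xA: (x \in A); last by rewrite andbF.
  by rewrite (negbTE (Ae x xA)).
rewrite cards0 subn0.
move: A0; rewrite -card_gt0; case: (d) d1 => // d' _; rewrite succnK; lia.
Qed.

Lemma card_eA (A : {set V}) : A \subset N -> #|e :|: A| = (d.-1 + #|A|)%N.
Proof.
move=> AN.
have Ae : forall c, c \in A -> c \notin e.
  by move=> c cA; apply: N_notin; apply: (subsetP AN).
rewrite cardsU card_e.
have -> : e :&: A = set0.
  apply/setP => x; rewrite !inE; case xA: (x \in A); last by rewrite andbF.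
  by rewrite (negbTE (Ae x xA)).
by rewrite cards0 subn0.
Qed.

Lemma big_step_eq (R : Type) (idx : R) (op : Monoid.com_law idx) (F : nat -> R) :
  \big[op/idx]_(W in clique_complex d C) F #|W| =
  op (\big[op/idx]_(W in clique_complex d C') F #|W|)
     (\big[op/idx]_(A : {set V} | (A \subset N) && (A != set0)) F (d.-1 + #|A|)%N).
Proof.
rewrite (bigID Pe) [op _ _]Monoid.mulmC /=; congr (op _ _).
  by apply: eq_bigl => W; rewrite !inE clique_del.
rewrite (reindex_onto (fun A => e :|: A) (fun W => W :\: e)) /=; last first.
  move=> W /andP[_ /andP[eW _]]; apply/setP => x; rewrite !inE.
  by case xe: (x \in e) => //=; rewrite (subsetP eW).
apply: eq_big => A; first by rewrite inE clique_add.
by rewrite inE clique_add => /andP[AN _]; rewrite card_eA.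
Qed.
End Comb.
Local Open Scope ring_scope.

Lemma sum_by_card (T : finType) (R : pzRingType) (x : R) (P : pred {set T}) (m : nat) :
  (forall A, P A -> #|A| < m.+1)%N ->
  \sum_(A | P A) x ^+ #|A| =
  \sum_(i < m.+1) x ^+ i *+ #|[set A | P A & #|A| == i]|.
Proof.
move=> Hm.
rewrite (@partition_big _ _ _ _ _ 'I_m.+1 P (fun A : {set T} => inord #|A|) xpredT) //.
apply: eq_bigr => i _; rewrite -sumr_const.
apply: eq_big => A; first by rewrite inE; case PA: (P A) => //=; rewrite -(inj_eq val_inj) /= inordK ?Hm.
by move=> /andP[PA /eqP <-]; rewrite inordK ?Hm.
Qed.

Lemma sum_subsets (T : finType) (R : pzRingType) (x : R) (S : {set T}) :
  \sum_(A : {set T} | A \subset S) x ^+ #|A| = (x + 1) ^+ #|S|.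
Proof.
rewrite (@sum_by_card _ _ _ _ #|S|); last by move=> A AS; rewrite ltnS subset_leq_card.
by rewrite exprD1n; apply: eq_bigr => i _; rewrite cards_draws.
Qed.

Lemma sum_subsets1 (T : finType) (R : pzRingType) (x : R) (S : {set T}) :
  \sum_(A : {set T} | (A \subset S) && (A != set0)) x ^+ #|A| = (x + 1) ^+ #|S| - 1.
Proof.
by rewrite -sum_subsets [in RHS](bigD1 set0) ?sub0set //= cards0 expr0 addrC addrK.
Qed.

Lemma fpoly_base (n d : nat) : (1 <= d)%N ->
  fpoly (clique_complex (n:=n) d set0) = \sum_(i < d) ('C(n, i))%:R *: 'X^i.
Proof.
case: d => // d' _.
rewrite /fpoly (eq_bigl (fun W : {set 'I_n} => #|W| < d'.+1)%N); last first.
  by move=> W; rewrite inE clique0.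
rewrite (@sum_by_card _ _ _ _ d') //; apply: eq_bigr => i _.
rewrite scaler_nat; congr (_ *+ _).
rewrite -[n in 'C(n, _)]card_ord -card_draws; apply: eq_card => A.
by rewrite !inE andb_idl // => /eqP ->; rewrite ltn_ord.
Qed.

Lemma aux_add (R : pzRingType) (a b c u : R) : a + u * c + u * b = a + u * (b + c).
Proof. by rewrite mulrDr (addrC (u * b)) addrA. Qed.

Lemma main_ind (n d : nat) (d1 : (1 <= d)%N) (es : seq {set 'I_n}) :
  forall C : {set {set 'I_n}}, uniform_clutter d C -> simplicial_order d C es ->
  fpoly (clique_complex d C) = fpoly (clique_complex (n:=n) d set0) +
     'X^(d.-1) * \sum_(k <- simplicial_multiset C es) (('X + 1) ^+ k - 1)
  /\ (\max_(W in clique_complex d C) #|W| = maxn (\max_(W in clique_complex (n:=n) d set0) #|W|)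
        (\max_(k <- simplicial_multiset C es) (d.-1 + k)))%N.
Proof.
elim: es => [|e es IH] C unifC /=.
  by move/eqP => ->; rewrite !big_nil mulr0 addr0 maxn0.
case/andP => se so.
have unif' : uniform_clutter d (deletion C e).
  apply/forallP => F; apply/implyP => FC; move/forallP: unifC => /(_ F) /implyP; apply.
  by move: FC; rewrite inE => /andP[].
have [IH1 IH2] := IH _ unif' so.
split.
  rewrite /fpoly (big_step_eq d1 unifC se +%R (fun k => 'X^k : {poly int})) /=.
  rewrite /fpoly in IH1; rewrite IH1.
  under eq_bigr do rewrite exprD.
  rewrite -mulr_sumr sum_subsets1 big_cons; apply: aux_add.
rewrite (big_step_eq d1 unifC se maxn (fun k => k)) /= IH2 big_cons.
have -> : (\max_(A : {set 'I_n} | (A \subset open_nbhd C e) && (A != set0)) (d.-1 + #|A|) =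
           d.-1 + #|open_nbhd C e|)%N.
  apply/eqP; rewrite eqn_leq; apply/andP; split.
    by apply/bigmax_leqP => A /andP[AN _]; rewrite leq_add2l subset_leq_card.
  have := @leq_bigmax_cond _ (fun A : {set 'I_n} => (A \subset open_nbhd C e) && (A != set0)) (fun A => (d.-1 + #|A|)%N) (open_nbhd C e).
  by apply; rewrite subxx (N_nonempty d1 unifC se).
by rewrite -maxnA (maxnC (d.-1 + _)%N).
Qed.
Unset Implicit Arguments. Set Strict Implicit.

Lemma binom_sum (k m : nat) : (k <= m)%N ->
  \sum_(1 <= i < m.+1) ('C(k, i))%:R *: ('X^i : {poly int}) = ('X + 1) ^+ k - 1.
Proof.
move=> km.
have H : \sum_(0 <= i < m.+1) ('C(k, i))%:R *: ('X^i : {poly int}) = ('X + 1) ^+ k.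
  rewrite exprD1n big_mkord (big_ord_widen m.+1 (fun i => 'X^i *+ 'C(k, i))) //.
  rewrite [RHS]big_mkcond /=; apply: eq_bigr => i _; rewrite scaler_nat.
  by case: ifP => // /negbT; rewrite -leqNgt => /bin_small ->.
by rewrite -H [in RHS]big_ltn // bin0 scale1r expr0 [1 + _]addrC addrK.
Qed.

Lemma max_shift (a k : nat) (s : seq nat) :
  (\max_(j <- k :: s) (a + j) = a + \max_(j <- k :: s) j)%N.
Proof.
elim: s k => [|j s IH] k; first by rewrite !big_cons !big_nil; lia.
rewrite big_cons IH big_cons [in RHS]big_cons big_cons; lia.
Qed.

Theorem proposition2p1 (d n : nat) (C : {set {set 'I_n}}) (es : seq {set 'I_n}) :
  (1 <= d)%N ->
  uniform_clutter d C ->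
  simplicial_order d C es ->
  let Ns := simplicial_multiset C es in
  let M := fun i : nat => (\sum_(k <- Ns) 'C(k, i))%N in
  let Delta := clique_complex d C in
  [/\ fpoly Delta =
        \sum_(i < d) ('C(n, i))%:R *: 'X^i
        + 'X^(d.-1) * \sum_(1 <= i < (\max_(k <- Ns) k).+1) (M i)%:R *: 'X^i,
      fpoly Delta =
        \sum_(i < d) ('C(n, i))%:R *: 'X^i
        + 'X^(d.-1) * \sum_(k <- Ns) (('X + 1) ^+ k - 1)
    & C != set0 ->
      cdim Delta = (\max_(k <- Ns) k)%:Z + (d%:Z - 2)].
Proof.
move=> d1 unifC so Ns M Delta.
have [H1 H2] := main_ind d1 unifC so.
have F2 : fpoly Delta = \sum_(i < d) ('C(n, i))%:R *: 'X^i
        + 'X^(d.-1) * \sum_(k <- Ns) (('X + 1) ^+ k - 1).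
  by rewrite /Delta H1 fpoly_base.
split => //.
  rewrite F2; congr (_ + _ * _).
  rewrite (eq_big_seq (fun k => \sum_(1 <= i < (\max_(k <- Ns) k).+1)
                ('C(k, i))%:R *: ('X^i : {poly int}))); last first.
    by move=> k kN; rewrite binom_sum //; have := @leq_bigmax_seq _ Ns xpredT (fun k => k) k kN isT.
  rewrite exchange_big /=; apply: eq_bigr => i _.
  by rewrite /M natr_sum scaler_suml.
move=> C0.
have : Ns != [::].
  rewrite /Ns; case: (es) so => [/= /eqP C0'|] //.
  by rewrite C0' eqxx in C0.
case NsE : Ns => [//|k s] _.
rewrite /cdim /Delta H2 -/Ns NsE max_shift.
have m0 : (\max_(W in clique_complex (n:=n) d set0) #|W| <= d.-1)%N.
  apply/bigmax_leqP => W; rewrite inE clique0; lia.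
have -> : maxn (\max_(W in clique_complex (n:=n) d set0) #|W|)
           (d.-1 + \max_(j <- k :: s) j) = (d.-1 + \max_(j <- k :: s) j)%N.
  lia.
lia.
Qed.
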